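(* Let $a$ and $b$ be coprime odd integers and let $\beta$ be a positive integer such that $2^\beta\,\|\,(a+b)$. Then: 1) $G_{(a,b)}(\beta)\neq\emptyset$ and every element of $G_{(a,b)}(\beta)$ is odd; 2) $G_{(a,b)}(\beta+1)=\emptyset$.
   Context: For coprime nonzero integers $a,b$ and an integer $\beta\geq0$, $G_{(a,b)}(\beta)$ is the set of positive integers $d$ such that $2^\beta d\mid(a^k+b^k)$ for some positive integer $k$. $2^\beta\,\|\,m$ means $2^\beta\mid m$ and $2^{\beta+1}\nmid m$. *)

(* Defs.v *)
From mathcomp Require Import all_boot all_order all_algebra.
Set Implicit Arguments. Unset Strict Implicit. Unset Printing Implicit Defensive.
Import Order.TTheory GRing.Theory Num.Theory.
Local Open Scope ring_scope.

Definition G (a b : int) (beta : nat) (d : nat) : Prop :=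
  (0 < d)%N /\
  exists k : nat, (0 < k)%N /\ (((2 ^ beta * d)%N)%:Z %| a ^+ k + b ^+ k)%Z.

Definition exact_pow2_div (beta : nat) (m : int) : Prop :=
  ((2 ^ beta)%N%:Z %| m)%Z /\ ~~ ((2 ^ beta.+1)%N%:Z %| m)%Z.

(* Main.v *)
Require Import Defs.
From mathcomp Require Import all_boot all_order all_algebra.
From mathcomp Require Import zify ring.
Import Order.TTheory GRing.Theory Num.Theory.
Local Open Scope ring_scope.

Lemma key (a b P x y m : int) :
  a = 2 * x + 1 -> b = 2 * y + 1 -> a + b = P * (2 * m + 1) ->
  forall j : nat,
  (exists q, a ^+ (j.*2.+1) + b ^+ (j.*2.+1) = P * (2 * q + 1)) /\
  (exists q, a ^+ (j.*2.+2) + b ^+ (j.*2.+2) = 2 * (2 * q + 1)).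
Proof.
move=> ha hb hab; elim=> [|j [[q hq] [q' hq']]].
  split; first by exists m; rewrite expr1 expr1.
  exists (x ^+ 2 + x + y ^+ 2 + y); rewrite ha hb; ring.
have e1 : forall c : int, c ^+ (j.+1.*2.+1) = c ^+ (j.*2.+1) * c * c.
  by move=> c; rewrite /= !exprS; ring.
have e2 : forall c : int, c ^+ (j.+1.*2.+2) = c ^+ (j.*2.+2) * c * c.
  by move=> c; rewrite /= !exprS; ring.
rewrite (e1 a) (e1 b) (e2 a) (e2 b); split.
  set A := a ^+ _ in hq *; set B := b ^+ _ in hq *.
  exists ((2 * x ^+ 2 + 2 * x) * (2 * q + 1) + q + B * (y - x) * (2 * m + 1)).
  have -> : A = P * (2 * q + 1) - B by rewrite -hq; ring.
  have hP : P * (2 * m + 1) = 2 * x + 2 * y + 2 by rewrite -hab ha hb; ring.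
  transitivity ((2 * x + 1) ^+ 2 * P * (2 * q + 1) + B * (2 * y - 2 * x) * (P * (2 * m + 1))).
    rewrite hP ha hb; ring.
  ring.
set A := a ^+ _ in hq' *; set B := b ^+ _ in hq' *.
exists ((2 * x ^+ 2 + 2 * x) * (2 * q' + 1) + q' + B * (y - x) * (x + y + 1)).
have -> : A = 2 * (2 * q' + 1) - B by rewrite -hq'; ring.
rewrite ha hb; ring.
Qed.

Lemma kcases (k : nat) : (0 < k)%N -> exists j, k = j.*2.+1 \/ k = j.*2.+2.
Proof.
elim: k => // k IH _; case: k IH => [|k] IH; first by exists 0%N; left.
have [j [->|->]] := IH isT.
  by exists j; right.
by exists j.+1; left.
Qed.

Theorem lemma2p14 (a b : int) (beta : nat) :
  coprimez a b -> ~~ (2 %| a)%Z -> ~~ (2 %| b)%Z -> (0 < beta)%N ->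
  exact_pow2_div beta (a + b) ->
  ((exists d : nat, G a b beta d) /\ (forall d : nat, G a b beta d -> odd d))
  /\ (forall d : nat, ~ G a b beta.+1 d).
Proof.
move=> _ ha hb hbeta [h1 h2].
set P : int := (2 ^ beta)%N%:Z.
have hS : (2 ^ beta.+1)%N%:Z = 2 * P by rewrite expnS PoszM.
have hP0 : P = 2 * (2 ^ beta.-1)%N%:Z.
  by rewrite /P -PoszM -expnS prednK.
have ha' : a = 2 * (a %/ 2)%Z + 1 by lia.
have hb' : b = 2 * (b %/ 2)%Z + 1 by lia.
have [c hc] := dvdzP h1.
have hcodd : ~~ (2 %| c)%Z.
  apply/negP => /dvdzP [t ht]; move/negP: h2; apply; apply/dvdzP; exists t.
  by rewrite hc ht hS; ring.
have hc' : a + b = P * (2 * (c %/ 2)%Z + 1).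
  have -> : 2 * (c %/ 2)%Z + 1 = c by lia.
  by rewrite hc mulrC.
have K := @key _ _ _ _ _ _ ha' hb' hc'.
have main : forall k, (0 < k)%N -> ~ ((2 ^ beta.+1)%N%:Z %| a ^+ k + b ^+ k)%Z.
  move=> k /kcases [j [->|->]]; rewrite hS => /dvdzP [n hn].
    have [[q hq] _] := K j.
    move: hn; rewrite hq => hn.
    have : P * (2 * q + 1 - 2 * n) = 0 by rewrite mulrBr hn; ring.
    move/eqP; rewrite mulf_eq0 => /orP [/eqP|/eqP]; last by lia.
    by rewrite /P; have := expn_gt0 2 beta; lia.
  have [_ [q hq]] := K j.
  move: hn; rewrite hq hP0.
  set t := Posz _.
  have -> : n * (2 * (2 * t)) = 4 * (n * t) by ring.
  lia.
have dv : forall d k : nat, ((2 ^ beta.+1 * d)%N%:Z %| a ^+ k + b ^+ k)%Z ->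
    ((2 ^ beta.+1)%N%:Z %| a ^+ k + b ^+ k)%Z.
  move=> d k; apply: dvdz_trans; apply/dvdzP; exists d%:Z.
  by rewrite PoszM mulrC.
split; last first.
  by move=> d [_ [k [hk hd]]]; exact: (main k hk (dv d k hd)).
split.
  exists 1%N; split => //; exists 1%N; split => //.
  by rewrite !expr1 muln1.
move=> d [hd [k [hk hdv]]]; apply/negPn/negP => ev.
apply: (main k hk); apply: (dv d./2 k).
have -> : (2 ^ beta.+1 * d./2)%N = (2 ^ beta * d)%N.
  by rewrite -[in RHS](odd_double_half d) (negbTE ev) add0n -mul2n expnS mulnCA mulnA.
exact: hdv.
Qed.
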